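(* Let $\beta>0$ and $c>b>0$, and let $(X_t)_{t=0,1,2,\ldots}$ be the discrete-time Markov chain on the nonnegative integers with $X_0=0$ and transition probabilities $$P(k,k+1)=\tfrac12 e^{-\beta c},\qquad P(k,k-1)=\tfrac12 e^{-\beta b},\qquad P(k,k)=1-\tfrac12 e^{-\beta c}-\tfrac12 e^{-\beta b}\quad (k\ge 1),$$ $$P(0,1)=\tfrac12 e^{-\beta c},\qquad P(0,0)=1-\tfrac12 e^{-\beta c},$$ and $P(k,l)=0$ for all other pairs $(k,l)$. For $k\ge1$ define the hitting time $\tau^0_k=\inf\{t\ge 1:\ X_t=k\}$. Then for every $k\ge 1$ and every $\varepsilon>0$, $$\lim_{\beta\to\infty} P\left(e^{\beta c k-\beta b(k-1)-\beta\varepsilon}<\tau^0_k<e^{\beta c k-\beta b(k-1)+\beta\varepsilon}\right)=1 .$$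
   Context: The constants $c>b>0$ are held fixed while $\beta\to\infty$; the law of the chain (and hence of $\tau^0_k$) depends on $\beta$ through the transition probabilities. *)

(* Defs.v *)
From HB Require Import structures.
From mathcomp Require Import all_boot all_order all_algebra.
From mathcomp Require Import all_classical all_reals all_analysis.
Set Implicit Arguments. Unset Strict Implicit. Unset Printing Implicit Defensive.
Import Order.TTheory GRing.Theory Num.Theory.
Local Open Scope ring_scope.

Section Chain.
Variable R : realType.

Definition trans (beta b c : R) (k l : nat) : R :=
  let p := expR (- (beta * c)) / 2 in
  let q := expR (- (beta * b)) / 2 in
  if k == 0%N then
    (if l == 1%N then p else if l == 0%N then 1 - p else 0)
  else
    (if l == k.+1 then p else if l == k.-1 then q
     else if l == k then 1 - p - q else 0).

(* the path of length t (states x_0 = 0, x_1, ..., x_t) encoded by f *)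
Definition path_of (t : nat) (f : {ffun 'I_t -> 'I_t.+1}) (s : nat) : nat :=
  nth 0%N (0%N :: [seq val (f i) | i <- enum 'I_t]) s.

Definition path_prob (beta b c : R) (t : nat) (x : nat -> nat) : R :=
  \prod_(s < t) trans beta b c (x s) (x s.+1).

(* P(tau^0_k = t), tau^0_k = inf {t >= 1 : X_t = k}, X_0 = 0.
   Paths from 0 of length t stay in [0, t], so summing over
   all f : 'I_t -> 'I_t.+1 covers all trajectories of positive probability. *)
Definition hit_prob (beta b c : R) (k t : nat) : R :=
  if t == 0%N then 0 else
  \sum_(f : {ffun 'I_t -> 'I_t.+1})
     (((path_of f t == k) &&
       [forall s : 'I_t, (0 < val s)%N ==> (path_of f (val s) != k)])%:R
      * path_prob beta b c t (path_of f)).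

Definition window_prob (beta b c : R) (k : nat) (lo hi : R) : R :=
  \sum_(0 <= t < (Num.truncn hi).+1)
     (((lo < t%:R) && (t%:R < hi))%:R * hit_prob beta b c k t).

End Chain.

(* Main.v *)
Require Import Defs.
From HB Require Import structures.
From mathcomp Require Import all_boot all_order all_algebra.
From mathcomp Require Import all_classical all_reals all_analysis.
From mathcomp Require Import ring lra.
Import Order.TTheory GRing.Theory Num.Theory.
Import numFieldNormedType.Exports.
Local Open Scope classical_set_scope.
Local Open Scope ring_scope.

Section Comb.
Set Implicit Arguments. Unset Strict Implicit. Unset Printing Implicit Defensive.
Variable R : realType.

Definition pathN (t N : nat) (f : {ffun 'I_t -> 'I_N}) (s : nat) : nat :=
  nth 0%N (0%N :: [seq val (f i) | i <- enum 'I_t]) s.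

Lemma pathN0 t N (f : {ffun 'I_t -> 'I_N}) : pathN f 0 = 0%N.
Proof. by []. Qed.

Lemma pathNS t N (f : {ffun 'I_t -> 'I_N}) (i : 'I_t) : pathN f i.+1 = val (f i).
Proof. by rewrite /pathN /= (nth_map i) ?size_enum_ord // nth_ord_enum. Qed.

Lemma pathN_out t N (f : {ffun 'I_t -> 'I_N}) s : (t <= s)%N -> pathN f s.+1 = 0%N.
Proof. by move=> h; rewrite /pathN /= nth_default // size_map size_enum_ord. Qed.

Definition ext t N (f : {ffun 'I_t -> 'I_N}) (y : 'I_N) : {ffun 'I_t.+1 -> 'I_N} :=
  [ffun i => match unlift ord_max i with Some j => f j | None => y end].

Definition restr t N (f : {ffun 'I_t.+1 -> 'I_N}) : {ffun 'I_t -> 'I_N} :=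
  [ffun j => f (lift ord_max j)].

Lemma ext_bij t N : bijective (fun p : {ffun 'I_t -> 'I_N} * 'I_N => ext p.1 p.2).
Proof.
exists (fun f => (restr f, f ord_max)).
  move=> [f y] /=; congr pair.
    by apply/ffunP => j; rewrite !ffunE liftK.
  by rewrite ffunE unlift_none.
move=> f /=; apply/ffunP => i; rewrite !ffunE.
by case: unliftP => [j ->|->]; rewrite ?ffunE.
Qed.

Lemma pathN_ext t N (f : {ffun 'I_t -> 'I_N}) y s :
  pathN (ext f y) s = if s == t.+1 then val y else pathN f s.
Proof.
case: s => [|s] //=.
case: (ltngtP s t) => hs.
- rewrite eqSS (ltn_eqF hs).
  have := pathNS (ext f y) (lift ord_max (Ordinal hs)); rewrite lift_max /= => ->.
  by rewrite (pathNS _ (Ordinal hs)) ffunE liftK.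
- rewrite eqSS (gtn_eqF hs) !pathN_out //; exact: ltnW.
- subst s; rewrite eqxx (pathNS _ ord_max) ffunE unlift_none //.
Qed.

Variables (beta b c : R) (k : nat).
Hypothesis hk : (0 < k)%N.

Definition Bsum t N (g : nat -> R) : R :=
  \sum_(f : {ffun 'I_t -> 'I_N})
    ([forall s : 'I_t, pathN f s != k])%:R * path_prob beta b c t (pathN f) * g (pathN f t).

Definition TopN N (g : nat -> R) (x : nat) : R :=
  (x != k)%:R * \sum_(y < N) trans beta b c x y * g y.

Lemma Bsum0 N g : Bsum 0 N g = g 0%N.
Proof.
rewrite /Bsum (eq_bigr (fun _ => g 0%N)); last first.
  move=> f _; rewrite /path_prob big_ord0 mulr1.
  have -> : [forall s : 'I_0, pathN f s != k] by apply/fintype.forallP => -[].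
  by rewrite mul1r.
by rewrite sumr_const card_ffun card_ord card_ord expn0.
Qed.

Lemma Bsum_rec t N g : Bsum t.+1 N g = Bsum t N (TopN N g).
Proof.
rewrite /Bsum (reindex _ (onW_bij _ (ext_bij t N))) /=.
set F := (fun (f : {ffun 'I_t -> 'I_N}) (y : 'I_N) => [forall s : 'I_t.+1, pathN (ext f y) s != k]%:R * path_prob beta b c t.+1 (pathN (ext f y)) * g (pathN (ext f y) t.+1)).
rewrite (eq_bigr (fun p => F p.1 p.2)) //.
rewrite -pair_bigA /=.
apply: eq_bigr => f _.
rewrite /TopN mulr_sumr mulr_sumr; apply: eq_bigr => y _; rewrite /F; clear F.
have hp : forall s, (s <= t)%N -> pathN (ext f y) s = pathN f s.
  by move=> s hs; rewrite pathN_ext; case: eqP => // e; move: hs; rewrite e ltnn.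
have -> : [forall s : 'I_t.+1, pathN (ext f y) s != k] =
          [forall s : 'I_t, pathN f s != k] && (pathN f t != k).
  apply/fintype.forallP/andP.
    move=> H; split; last by have := H ord_max; rewrite hp.
    apply/fintype.forallP => s; have := H (widen_ord (leqnSn t) s).
    rewrite /= hp //; exact: ltnW.
  move=> [/fintype.forallP H1 H2] s; rewrite hp; last by rewrite -ltnS.
  case: (ltngtP s t) => hs; first by have := H1 (Ordinal hs).
    by have := ltn_ord s; rewrite ltnS leqNgt hs.
  by rewrite hs.
rewrite /path_prob big_ord_recr /=.
rewrite (eq_bigr (fun s : 'I_t => trans beta b c (pathN f s) (pathN f s.+1))); last first.
  by move=> s _; rewrite !hp // ltnW.
rewrite !pathN_ext eqxx (ltn_eqF (ltnSn t)) -mulnb natrM.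
rewrite -!mulrA; congr (_ * _); rewrite mulrCA; congr (_ * _).
Qed.


Lemma Bsum_iter t N g : Bsum t N g = iter t (TopN N) g 0%N.
Proof.
elim: t g => [|t IH] g; first by rewrite Bsum0.
by rewrite Bsum_rec IH iterSr.
Qed.

Definition Top (g : nat -> R) (x : nat) : R :=
  (x < k)%:R * \sum_(0 <= y < x.+2) trans beta b c x y * g y.

Lemma trans_far x y : (x.+2 <= y)%N -> trans beta b c x y = 0.
Proof.
move=> h; rewrite /trans.
case: x h => [|x] h /=.
  by rewrite (gtn_eqF h) (gtn_eqF (ltnW h)).
have h1 : (x.+1 < y)%N by apply: ltnW.
have h2 : (x < y)%N by apply: ltnW.
by rewrite (gtn_eqF h) (gtn_eqF h2) (gtn_eqF h1).
Qed.

Lemma iterN_Top j N g x : (x <= k)%N -> (x + j < N)%N ->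
  iter j (TopN N) g x = iter j Top g x.
Proof.
elim: j x => [|j IH] x hx hN //=.
rewrite /TopN /Top.
case: (ltngtP x k) => hxk; last first.
- by rewrite /= !mul0r.
- by move: hx; rewrite leqNgt hxk.
rewrite /= !mul1r.
rewrite -(big_mkord xpredT (fun y => trans beta b c x y * iter j (TopN N) g y)).
rewrite (big_cat_nat (n := x.+2)) //=; last by move: hN; rewrite addnS; apply: leq_trans; rewrite ltnS leq_addr.
rewrite [X in _ + X]big_nat_cond [X in _ + X]big1 ?addr0; last first.
  by move=> y /andP[/andP[h1 _] _]; rewrite trans_far // mul0r.
apply: eq_big_nat => y /andP[_ hy]; congr (_ * _); apply: IH.
- by apply: leq_trans hxk; rewrite -ltnS.
- by move: hN; rewrite addnS -addSn; apply: leq_ltn_trans; rewrite leq_add2r -ltnS.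
Qed.

Definition Jk (y : nat) : R := (y == k)%:R.

Lemma hit_iter t : hit_prob beta b c k t = iter t Top Jk 0%N.
Proof.
case: t => [|t]; first by rewrite /hit_prob /= /Jk eq_sym (gtn_eqF hk).
rewrite -(@iterN_Top t.+1 t.+2) // -Bsum_iter /hit_prob /= /Bsum.
apply: eq_bigr => f _.
rewrite -mulnb natrM /Jk [RHS]mulrC mulrA; congr (_ * _ * _).
congr (nat_of_bool _ )%:R.
apply/fintype.forallP/fintype.forallP => H s.
  case: s H => -[|s] hs H /=; first by rewrite /pathN /= eq_sym (gtn_eqF hk).
  by have := H (Ordinal hs).
by apply/implyP => _; apply: H.
Qed.

End Comb.

Section Alg.
Set Implicit Arguments. Unset Strict Implicit. Unset Printing Implicit Defensive.
Variable R : realType.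
Variables (beta b c : R) (k : nat).
Hypothesis hk : (0 < k)%N.
Hypothesis hbeta : 0 < beta.
Hypothesis hb : 0 < b.
Hypothesis hbc : b < c.

Definition pp := expR (- (beta * c)) / 2.
Definition qq := expR (- (beta * b)) / 2.

Lemma sum_trans x (g : nat -> R) :
  \sum_(0 <= y < x.+2) trans beta b c x y * g y =
  if x is x'.+1 then qq * g x' + (1 - pp - qq) * g x + pp * g x.+1
  else (1 - pp) * g 0%N + pp * g 1%N.
Proof.
case: x => [|x].
  rewrite !big_nat_recr //= big_geq // add0r /trans /= -/pp; ring.
rewrite !big_nat_recr //= big_nat_cond big1 ?add0r; last first.
  move=> y /andP[/andP[_ hy] _]; rewrite /trans /=.
  rewrite (ltn_eqF hy) (ltn_eqF (ltn_trans hy (ltnSn _))).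
  by rewrite (ltn_eqF (ltn_trans hy (ltn_trans (ltnSn _) (ltnSn _)))) mul0r.
rewrite /trans /= -/pp -/qq.
rewrite eqxx (gtn_eqF (ltnSn x)) (gtn_eqF (ltnW (ltnSn x.+1))) eqxx.
rewrite (gtn_eqF (ltnSn x.+1)) eqxx.
rewrite (ltn_eqF (ltnW (ltnSn x.+1))) (ltn_eqF (ltnSn x.+1)).
ring.
Qed.


Lemma pp_gt0 : 0 < pp.
Proof. by rewrite /pp divr_gt0 ?expR_gt0. Qed.
Lemma qq_gt0 : 0 < qq.
Proof. by rewrite /qq divr_gt0 ?expR_gt0. Qed.
Lemma pp_le : pp <= 1/2.
Proof.
rewrite /pp ler_pM2r ?invr_gt0 // expR_le1 oppr_le0.
apply: mulr_ge0; [exact: ltW|].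
by apply: ltW; apply: lt_trans hbc.
Qed.
Lemma qq_le : qq <= 1/2.
Proof.
by rewrite /qq ler_pM2r ?invr_gt0 // expR_le1 oppr_le0; apply: mulr_ge0; exact: ltW.
Qed.

Lemma trans_ge0 x y : 0 <= trans beta b c x y.
Proof.
have := pp_gt0; have := qq_gt0; have := pp_le; have := qq_le.
rewrite /trans /= -/pp -/qq => *.
by repeat case: ifP => _; lra.
Qed.

Definition iota_k (y : nat) : R := (y < k)%:R.

Notation T := (Top beta b c k).

Lemma Top_lin a d f g x : T (fun y => a * f y + d * g y) x = a * T f x + d * T g x.
Proof.
rewrite /Top (eq_bigr (fun y => a * (trans beta b c x y * f y) + d * (trans beta b c x y * g y))); last by move=> *; ring.
rewrite big_split /= -!mulr_sumr; ring.
Qed.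

Lemma iter_lin j a d f g x :
  iter j T (fun y => a * f y + d * g y) x = a * iter j T f x + d * iter j T g x.
Proof.
elim: j x => [|j IH] x //=.
rewrite -Top_lin; congr (T _ x); apply: funext => y; exact: IH.
Qed.

Lemma Top_mono f g x : (forall y, f y <= g y) -> T f x <= T g x.
Proof.
move=> h; rewrite /Top ler_wpM2l ?ler0n //; apply: ler_sum => y _.
by apply: ler_wpM2l; [exact: trans_ge0|exact: h].
Qed.

Lemma iter_mono j f g x : (forall y, f y <= g y) -> iter j T f x <= iter j T g x.
Proof.
move=> h; elim: j x => [|j IH] x /=; first exact: h.
by apply: Top_mono => y; apply: IH.
Qed.

Lemma iter_zero j x : iter j T (fun _ => 0) x = 0.
Proof.
elim: j x => [|j IH] x //=.
have -> : iter j T (fun _ => 0) = fun _ => 0 by apply: funext.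
by rewrite /Top big1 ?mulr0 // => y _; rewrite mulr0.
Qed.

Lemma iter_ge0 j g x : (forall y, 0 <= g y) -> 0 <= iter j T g x.
Proof.
by move=> h; have := @iter_mono j (fun _ => 0) g x h; rewrite iter_zero.
Qed.

Lemma Top_one : T (fun y => iota_k y + Jk R k y) = iota_k.
Proof.
apply: funext => x; rewrite /Top /iota_k.
case: (ltnP x k) => hx; last by rewrite mul0r.
rewrite mul1r (eq_big_nat _ _ (F2 := fun y => trans beta b c x y * 1)); last first.
  move=> y /andP[_ hy]; congr (_ * _); rewrite /Jk.
  case: (ltngtP y k) => hyk //=; first by rewrite addr0.
  by have := leq_trans (hy : (y <= x.+1)%N) hx; rewrite leqNgt hyk.
  by rewrite add0r.
rewrite sum_trans; case: x hx => [|x] _ /=; ring.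
Qed.

Definition mm t := iter t T iota_k 0%N.
Definition hh t := iter t T (Jk R k) 0%N.

Lemma mm_rec t : mm t = mm t.+1 + hh t.+1.
Proof.
rewrite /mm /hh !iterSr.
have := @iter_lin t 1 1 (T iota_k) (T (Jk R k)) 0%N; rewrite !mul1r => <-.
congr (iter _ _ _ _); apply: funext => y.
have E := Top_lin 1 1 iota_k (Jk R k) y; rewrite !mul1r in E.
rewrite !mul1r -E -{1}Top_one; congr (T _ y); apply: funext => z; by rewrite !mul1r.
Qed.

Lemma hh_ge0 t : 0 <= hh t.
Proof. by apply: iter_ge0 => y; rewrite /Jk ler0n. Qed.

Lemma mm_ge0 t : 0 <= mm t.
Proof. by apply: iter_ge0 => y; rewrite /iota_k ler0n. Qed.

Lemma mm0 : mm 0 = 1.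
Proof. by rewrite /mm /= /iota_k hk. Qed.

Lemma mm_noninc s t : (s <= t)%N -> mm t <= mm s.
Proof.
move=> /subnK <-; elim: (t - s)%N => [|n IH] //.
rewrite addSn; apply: le_trans IH; rewrite [X in _ <= X](mm_rec (n + s)) lerDl; exact: hh_ge0.
Qed.

Lemma mm_le1 t : mm t <= 1.
Proof. by rewrite -mm0; apply: mm_noninc. Qed.

Lemma hh0 : hh 0 = 0.
Proof. by rewrite /hh /= /Jk eq_sym (gtn_eqF hk). Qed.

Lemma sum_hh t : \sum_(s < t.+1) hh s = 1 - mm t.
Proof.
elim: t => [|t IH]; first by rewrite big_ord1 hh0 mm0 subrr.
by rewrite big_ord_recr /= IH (mm_rec t); ring.
Qed.


Definition ww := expR (beta * (c - b)).
Lemma ww_gt1 : 1 < ww.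
Proof. by rewrite /ww expR_gt1 mulr_gt0 // subr_gt0. Qed.
Lemma qq_ppw : qq = pp * ww.
Proof. by rewrite /pp /qq /ww mulrAC -expRD; congr (expR _ / 2); ring. Qed.

Definition VV (y : nat) : R := ww ^+ y / ww ^+ k.
Definition del : R := pp * (ww - 1) / ww ^+ k.

Lemma wwk_gt0 n : 0 < ww ^+ n.
Proof. by apply: exprn_gt0; apply: lt_trans ww_gt1. Qed.

Lemma VV_ge0 y : 0 <= VV y.
Proof. by rewrite /VV divr_ge0 // ltW // wwk_gt0. Qed.

Lemma del_ge0 : 0 <= del.
Proof.
apply: divr_ge0; last exact: ltW (wwk_gt0 k).
by apply: mulr_ge0; [exact: ltW pp_gt0 | rewrite subr_ge0; exact: ltW ww_gt1].
Qed.

Lemma TopV x : T VV x <= VV x - Jk R k x + del * iota_k x.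
Proof.
have hw := ww_gt1; have hwk := wwk_gt0 k; have hp := pp_gt0.
rewrite /Top /iota_k /Jk; case: (ltngtP x k) => hx /=.
- rewrite mul1r sum_trans subr0 mulr1.
  case: x hx => [|x] hx.
    rewrite le_eqVlt; apply/orP; left; apply/eqP.
    rewrite /VV /del expr0 expr1; field; exact: lt0r_neq0.
  have E : qq * VV x + (1 - pp - qq) * VV x.+1 + pp * VV x.+2 = VV x.+1.
    rewrite qq_ppw /VV !exprS; field; exact: lt0r_neq0.
  by rewrite E lerDl del_ge0.
- by rewrite mul0r subr0 mulr0 addr0 VV_ge0.
- by rewrite mul0r mulr0 addr0 /VV hx divff ?subrr // gt_eqF.
Qed.

Lemma chainV t : iter t T VV 0%N + \sum_(s < t) hh s <= VV 0%N + del * t%:R.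
Proof.
elim: t => [|t IH]; first by rewrite big_ord0 /= addr0 mulr0 addr0.
rewrite big_ord_recr iterSr /=.
have h1 : iter t T (T VV) 0%N <= iter t T VV 0%N - hh t + del * mm t.
  have HH : forall y, T VV y <= (fun y => 1 * (fun y => 1 * VV y + (-1) * Jk R k y) y + del * iota_k y) y.
    by move=> y /=; rewrite !mul1r mulN1r; exact: TopV.
  have := iter_mono t 0%N HH.
  by rewrite iter_lin iter_lin /hh /mm !mul1r mulN1r.
have h2 := mm_le1 t.
have h3 := del_ge0.
have h4 : del * mm t <= del by rewrite ler_piMr.
rewrite -natr1 mulrDr mulr1.
lra.
Qed.

Lemma lowerV t : 1 - mm t <= VV 0%N + del * t.+1%:R.
Proof.
rewrite -sum_hh; have := chainV t.+1; have := @iter_ge0 t.+1 VV 0%N VV_ge0.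
lra.
Qed.

Definition DD : R := 1 / (pp * (ww - 1)).
Definition aa : R := (DD + 1 / pp) / (ww - 1).
Definition UU (y : nat) : R :=
  if (y <= k)%N then aa * (ww ^+ k - ww ^+ y) - DD * (k%:R - y%:R) else 0.

Lemma bern (w : R) n : 1 <= w -> (w - 1) * n%:R <= w ^+ n - 1.
Proof.
move=> hw; elim: n => [|n IH]; first by rewrite mulr0 expr0 subrr.
have h1 : 1 <= w ^+ n by apply: exprn_ege1.
have h2 : 0 <= (w ^+ n - 1) * (w - 1) by apply: mulr_ge0; lra.
rewrite exprS -natr1; nra.
Qed.

Lemma DD_gt0 : 0 < DD.
Proof.
have := ww_gt1; have := pp_gt0 => *.
by rewrite /DD divr_gt0 // mulr_gt0 // subr_gt0.
Qed.

Lemma aa_w : aa * (ww - 1) = DD + 1 / pp.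
Proof.
have := ww_gt1; have := pp_gt0 => *.
by rewrite /aa; field; rewrite lt0r_neq0 ?pp_gt0 // subr_eq0 (gt_eqF ww_gt1).
Qed.

Lemma UU_ge0 y : 0 <= UU y.
Proof.
rewrite /UU; case: ifP => // hy.
have hw := ww_gt1; have hp := pp_gt0; have hD := DD_gt0.
move: hy => /subnK <-; set n := (k - y)%N.
rewrite natrD addrK exprD.
have h1 := bern n (ltW hw).
have h2 : 1 <= ww ^+ y by apply: exprn_ege1; exact: ltW.
have h3 : ww ^+ n - 1 <= ww ^+ n * ww ^+ y - ww ^+ y.
  have h0 : 1 <= ww ^+ n by apply: exprn_ege1; exact: ltW.
  have : 0 <= (ww ^+ n - 1) * (ww ^+ y - 1) by apply: mulr_ge0; lra.
  nra.
have ha : 0 <= aa.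
  rewrite /aa; apply: divr_ge0; last by lra.
  by apply: addr_ge0; [exact: ltW | apply: divr_ge0; [lra | exact: ltW]].
have e := aa_w.
have h4 : 0 <= 1 / pp * n%:R by apply: mulr_ge0; [apply: divr_ge0; lra | exact: ler0n].
have h5 : aa * ((ww - 1) * n%:R) <= aa * (ww ^+ n * ww ^+ y - ww ^+ y).
  by rewrite ler_wpM2l //; lra.
rewrite mulrA e mulrDl in h5.
lra.
Qed.

Lemma UU_le y : (y <= k)%N -> UU y = aa * (ww ^+ k - ww ^+ y) - DD * (k%:R - y%:R).
Proof. by rewrite /UU => ->. Qed.

Lemma TopU x : T UU x <= UU x - iota_k x.
Proof.
have hw := ww_gt1; have hp := pp_gt0.
rewrite /Top /iota_k; case: (ltnP x k) => hx /=; last by rewrite mul0r subr0 UU_ge0.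
rewrite mul1r sum_trans le_eqVlt; apply/orP; left; apply/eqP.
case: x hx => [|x] hx.
  rewrite !UU_le ?(ltnW hx) // /aa /DD expr0 expr1 subr0; field.
  by rewrite (lt0r_neq0 hp) subr_eq0 (gt_eqF hw).
rewrite !UU_le ?(ltnW hx) ?(ltnW (ltnW hx)) // /aa /DD qq_ppw !exprS !mulrS; field.
by rewrite subr_eq0 (gt_eqF hw) (lt0r_neq0 hp).
Qed.

Lemma chainU t : iter t T UU 0%N + \sum_(s < t) mm s <= UU 0%N.
Proof.
elim: t => [|t IH]; first by rewrite big_ord0 /= addr0.
rewrite big_ord_recr iterSr /=.
have h1 : iter t T (T UU) 0%N <= iter t T UU 0%N - mm t.
  have HH : forall y, T UU y <= (fun y => 1 * UU y + (-1) * iota_k y) y.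
    by move=> y /=; rewrite !mul1r mulN1r; exact: TopU.
  have := iter_mono t 0%N HH.
  by rewrite iter_lin /mm !mul1r mulN1r.
lra.
Qed.

Lemma mm_upper t : t.+1%:R * mm t <= UU 0%N.
Proof.
have := chainU t.+1; have := @iter_ge0 t.+1 UU 0%N UU_ge0.
have : t.+1%:R * mm t <= \sum_(s < t.+1) mm s.
  have -> : t.+1%:R * mm t = \sum_(s < t.+1) mm t.
    by rewrite sumr_const card_ord mulr_natl.
  by apply: ler_sum => s _; apply: mm_noninc; rewrite -ltnS.
lra.
Qed.

Lemma UU0_le : UU 0%N <= aa * ww ^+ k.
Proof.
have hw := ww_gt1; have hp := pp_gt0; have hD := DD_gt0.
rewrite UU_le // expr0 subr0.
have ha : 0 <= aa.
  rewrite /aa; apply: divr_ge0; last by lra.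
  by apply: addr_ge0; [exact: ltW | apply: divr_ge0; [lra | exact: ltW]].
have : 0 <= DD * k%:R by apply: mulr_ge0; [exact: ltW | exact: ler0n].
nra.
Qed.



Lemma sum_hh_nat t : \sum_(0 <= s < t.+1) hh s = 1 - mm t.
Proof. by rewrite big_mkord sum_hh. Qed.

Lemma sum_hh_range a d : (a <= d)%N -> \sum_(a.+1 <= t < d.+1) hh t = mm a - mm d.
Proof.
move=> h; have := sum_hh_nat d.
rewrite (big_cat_nat (n := a.+1)) //= sum_hh_nat.
move=> e; have : \sum_(a.+1 <= i < d.+1) hh i = (1 - mm d) - (1 - mm a) by rewrite -e; ring.
move=> ->; ring.
Qed.

Lemma window_hh lo hi : window_prob beta b c k lo hi =
  \sum_(0 <= t < (Num.truncn hi).+1) ((lo < t%:R) && (t%:R < hi))%:R * hh t.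
Proof. by apply: eq_bigr => t _; rewrite hit_iter. Qed.

Lemma window_le1 lo hi : window_prob beta b c k lo hi <= 1.
Proof.
rewrite window_hh; apply: le_trans (_ : \sum_(0 <= t < (Num.truncn hi).+1) hh t <= 1).
  apply: ler_sum => t _; rewrite -[X in _ <= X]mul1r ler_wpM2r ?hh_ge0 //.
  by case: (_ && _); rewrite ?ler01.
rewrite sum_hh_nat; have := mm_ge0 (Num.truncn hi); lra.
Qed.

Lemma window_ge lo hi : 0 <= lo -> ((Num.truncn lo).+1 < Num.truncn hi)%N ->
  mm (Num.truncn lo) - mm (Num.truncn hi).-1 <= window_prob beta b c k lo hi.
Proof.
move=> hlo h12; rewrite window_hh.
set n1 := Num.truncn lo in h12 *; set n2 := Num.truncn hi in h12 *.
have hn2 : n2 = n2.-1.+1 by rewrite prednK //; apply: leq_ltn_trans h12.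
rewrite (big_cat_nat (n := n1.+1)) //=; last by apply: leq_trans (ltnW h12) _.
rewrite [X in _ <= _ + X](big_cat_nat (n := n2)) //=; last exact: ltnW.
have H1 : 0 <= \sum_(0 <= t < n1.+1) ((lo < t%:R) && (t%:R < hi))%:R * hh t.
  by apply: sumr_ge0 => t _; apply: mulr_ge0; [exact: ler0n | exact: hh_ge0].
have H3 : 0 <= \sum_(n2 <= t < n2.+1) ((lo < t%:R) && (t%:R < hi))%:R * hh t.
  by apply: sumr_ge0 => t _; apply: mulr_ge0; [exact: ler0n | exact: hh_ge0].
have H2 : \sum_(n1.+1 <= t < n2) ((lo < t%:R) && (t%:R < hi))%:R * hh t = mm n1 - mm n2.-1.
  rewrite {1}hn2 -sum_hh_range; last by rewrite -ltnS -hn2 ltnW.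
  apply: eq_big_nat => t /andP[ht1 ht2].
  have -> : lo < t%:R by rewrite -truncn_lt_nat.
  have -> : t%:R < hi.
    have : (t < Num.truncn hi)%N by rewrite -/n2 hn2.
    rewrite truncn_gt_nat => h; apply: lt_le_trans h; rewrite ltr_nat //.
  by rewrite mul1r.
lra.
Qed.


Lemma inv_le (x y : R) : 0 < x -> x <= y -> 1 / y <= 1 / x.
Proof.
move=> hx hxy; rewrite !div1r lef_pV2 // posrE; exact: lt_le_trans hxy.
Qed.

Lemma final_bound eps : 0 < eps -> 1 <= beta * (c - b) -> 1 <= beta * eps -> 1 <= beta * c ->
  1 - window_prob beta b c k
        (expR (beta * c * k%:R - beta * b * (k%:R - 1) - beta * eps))
        (expR (beta * c * k%:R - beta * b * (k%:R - 1) + beta * eps))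
  <= 1 / (beta * (c - b)) + 17 / (beta * eps) + 1 / (beta * c).
Proof.
move=> heps h1 h2 h3.
set E := beta * c * k%:R - beta * b * (k%:R - 1).
set e := expR E; set Y := expR (beta * eps).
have hk1 : 1 <= k%:R :> R by rewrite ler1n.
have hEc : beta * c <= E.
  have -> : E = beta * c + beta * (c - b) * (k%:R - 1) by rewrite /E; ring.
  rewrite lerDl; apply: mulr_ge0; lra.
have he : 1 + beta * c <= e by apply: le_trans (expR_ge1Dx _) _; rewrite /e ler_expR; lra.
have hY : 1 + beta * eps <= Y by exact: expR_ge1Dx.
have hw : 1 + beta * (c - b) <= ww by exact: expR_ge1Dx.
have hlo : expR (E - beta * eps) = e / Y by rewrite expRD expRN.
have hhi : expR (E + beta * eps) = e * Y by rewrite expRD.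
rewrite hlo hhi.
set X := ww ^+ k.-1.
have hX : 1 <= X by apply: exprn_ege1; lra.
have hwk : ww ^+ k = ww * X by rewrite /X -exprS prednK.
have hppX : pp = X / (2 * e).
  have hkk : k%:R = (k.-1)%:R + 1 :> R by rewrite natr1 prednK.
  have hX' : X = expR (- (beta * c)) * e.
    by rewrite /X /ww -expRM_natl /e -expRD; congr expR; rewrite /E hkk; ring.
  rewrite hX' /pp; field; rewrite /e; exact: lt0r_neq0 (expR_gt0 _).
have he0 : 0 < e by exact: expR_gt0.
have hY0 : 0 < Y by exact: expR_gt0.
have hVV : VV 0 = 1 / (ww * X) by rewrite /VV expr0 hwk.
have hwn : ww != 0 by apply: lt0r_neq0; lra.
have hw1n : ww - 1 != 0 by apply: lt0r_neq0; lra.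
have hXn : X != 0 by apply: lt0r_neq0; lra.
have hen : e != 0 by apply: lt0r_neq0.
have hdel : del = (ww - 1) / (2 * e * ww).
  by rewrite /del hwk hppX; field; rewrite hwn hen hXn.
have haa : aa * ww ^+ k = 2 * e * (ww / (ww - 1)) ^+ 2.
  by rewrite /aa /DD hwk hppX; field; rewrite hw1n hen hXn.
have hq : ww / (ww - 1) <= 2.
  by rewrite ler_pdivrMr; lra.
have hq0 : 0 <= ww / (ww - 1) by apply: divr_ge0; lra.
have hq2 : (ww / (ww - 1)) ^+ 2 <= 4.
  by rewrite expr2; nra.
have hlo0 : 0 <= e / Y by apply: divr_ge0; lra.
have hloY : e / Y <= e / 2 by rewrite ler_pdivrMr // mulrAC ler_pdivlMr //; nra.
set n1 := Num.truncn (e / Y); set n2 := Num.truncn (e * Y).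
have hn1 : n1%:R <= e / Y by rewrite truncn_le.
have hn2 : e * Y < n2.+1%:R by apply: truncnS_gt.
rewrite -natr1 in hn2.
have h12 : (n1.+1 < n2)%N.
  rewrite -(ltr_nat R) -natr1; nra.
have hn2p : (0 < n2)%N by apply: leq_ltn_trans h12.
have HW := window_ge hlo0 h12.
have HL := lowerV n1.
have HU := mm_upper n2.-1.
rewrite prednK // in HU.
have HU2 := UU0_le.
rewrite -natr1 in HL.
have hcb : 0 < beta * (c - b) by lra.
have B1 : VV 0 <= 1 / (beta * (c - b)).
  rewrite hVV; apply: inv_le => //; nra.
have hdel1 : del <= 1 / (2 * e).
  rewrite hdel ler_pdivrMr; last by apply: mulr_gt0; lra.
  have -> : 1 / (2 * e) * (2 * e * ww) = ww by field.
  lra.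
have hdel0 := del_ge0.
have B2 : del * (n1%:R + 1) <= 1 / (2 * e) * (e / Y + 1).
  have : 0 <= n1%:R :> R by exact: ler0n.
  nra.
have e2 : 1 / (2 * e) * (e / Y + 1) = (1 / 2) * (1 / Y) + (1 / 2) * (1 / e).
  by field; rewrite hen lt0r_neq0.
rewrite e2 in B2.
have hm0 := mm_ge0 n2.-1.
have heY : 4 <= e * Y by nra.
have B3 : mm n2.-1 <= 16 * (1 / Y).
  rewrite mul1r ler_pdivlMr //.
  have : n2%:R * mm n2.-1 <= 8 * e by nra.
  nra.
have B4 : 1 / Y <= 1 / (beta * eps) by apply: inv_le; lra.
have B5 : 1 / e <= 1 / (beta * c) by apply: inv_le; lra.
have : 0 <= 1 / Y by apply: divr_ge0; lra.
have : 0 <= 1 / e by apply: divr_ge0; lra.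
have -> : 17 / (beta * eps) = 17 * (1 / (beta * eps)) by rewrite mul1r.
lra.
Qed.

End Alg.

Theorem lemma1 (R : realType) (b c : R) (hb : 0 < b) (hbc : b < c)
  (k : nat) (hk : (0 < k)%N) (eps : R) (heps : 0 < eps) :
  (fun beta : R =>
     window_prob beta b c k
       (expR (beta * c * k%:R - beta * b * (k%:R - 1) - beta * eps))
       (expR (beta * c * k%:R - beta * b * (k%:R - 1) + beta * eps)))
    @ +oo --> (1 : R).
Proof.
apply/cvgrPdist_le => eta heta.
have hcb : 0 < c - b by rewrite subr_gt0.
have hc : 0 < c by apply: lt_trans hbc.
set S := 1 / (c - b) + 17 / eps + 1 / c.
have hS : 0 < S.
  by rewrite /S !addr_gt0 ?divr_gt0.
set M := 1 / (c - b) + 1 / eps + 1 / c + S / eta.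
apply: filterS (nbhs_pinfty_gt (num_real M)) => beta hM.
have q1 : 0 < 1 / (c - b) by rewrite divr_gt0.
have q2 : 0 < 1 / eps by rewrite divr_gt0.
have q3 : 0 < 1 / c by rewrite divr_gt0.
have q4 : 0 < S / eta by rewrite divr_gt0.
have hbeta : 0 < beta by rewrite /M in hM; lra.
have h1 : 1 <= beta * (c - b) by rewrite -ler_pdivrMr //; rewrite /M in hM; lra.
have h2 : 1 <= beta * eps by rewrite -ler_pdivrMr //; rewrite /M in hM; lra.
have h3 : 1 <= beta * c by rewrite -ler_pdivrMr //; rewrite /M in hM; lra.
have h4 : S <= eta * beta by rewrite -ler_pdivrMl //; rewrite /M in hM; lra.
have HB := final_bound hk hbeta hb hbc heps h1 h2 h3.
have HW := window_le1 hk hbeta hb hbc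
  (expR (beta * c * k%:R - beta * b * (k%:R - 1) - beta * eps))
  (expR (beta * c * k%:R - beta * b * (k%:R - 1) + beta * eps)).
rewrite ger0_norm; last by rewrite subr_ge0.
apply: le_trans HB _.
have -> : 1 / (beta * (c - b)) + 17 / (beta * eps) + 1 / (beta * c) = S / beta.
  rewrite /S; field.
  by rewrite !lt0r_neq0.
by rewrite ler_pdivrMr.
Qed.
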